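(* For every positive integer $k$, $$\sum_{\mathbf{o}\in\mathcal{O}_k}P(\mathbf{o})=1,$$ i.e., $P$ is a probability measure on $\mathcal{O}_k$.
   Context: For a positive integer $k$, $\mathcal{O}_k$ is the set of all multisets $\mathbf{o}=\{o_1,\dots,o_r\}$ of odd positive integers with $\sum_{i=1}^r o_i=k$ (e.g. $\mathcal{O}_6=\{\{1,5\},\{3,3\},\{3,1,1,1\},\{1,1,1,1,1,1\}\}$). For $\mathbf{o}\in\mathcal{O}_k$ with $r$ elements, $c(\mathbf{o},i)$ denotes the number of times $i$ appears in $\mathbf{o}$, and $P(\mathbf{o})=\dfrac{2^{r-1}}{\prod_{i=1}^k i^{c(\mathbf{o},i)}\,c(\mathbf{o},i)!}$. *)

(* Defs.v *)
From mathcomp Require Import all_boot all_order all_algebra.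
Set Implicit Arguments. Unset Strict Implicit. Unset Printing Implicit Defensive.
Import GRing.Theory Num.Theory.
Local Open Scope ring_scope.

(* A multiset o of positive integers with sum k is encoded by its
   multiplicity function c, c i = c(o,i), for i in {0,..,k}
   (any element of o is <= k, and every multiplicity is <= k). *)
Definition mult (k : nat) := {ffun 'I_k.+1 -> 'I_k.+1}.

Definition Ok (k : nat) : {set mult k} :=
  [set c : mult k | [forall i : 'I_k.+1, ~~ odd i ==> (nat_of_ord (c i) == 0%N)]
                    && ((\sum_(i < k.+1) i * c i)%N == k)].

Definition msize (k : nat) (c : mult k) : nat := (\sum_(i < k.+1) c i)%N.

Definition Pw (k : nat) (c : mult k) : rat :=
  (2%:R ^+ (msize c).-1) /
  (\prod_(i < k.+1) ((i : nat)%:R ^+ (c i : nat) * ((c i : nat)`!)%:R)).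

(* Main.v *)
Require Import Defs.
From mathcomp Require Import all_boot all_order all_algebra.
From mathcomp Require Import zify ring lra.
Set Implicit Arguments. Unset Strict Implicit. Unset Printing Implicit Defensive.
Import GRing.Theory Num.Theory.
Local Open Scope ring_scope.

Section S.
Variable N : nat.
Local Notation M := (mult N).

Definition osupp (c : M) := [forall i : 'I_N.+1, ~~ odd i ==> (nat_of_ord (c i) == 0%N)].
Definition wt (c : M) := (\sum_(i < N.+1) i * c i)%N.
Definition A (s : nat) : {set M} := [set c : M | osupp c && (wt c == s)].
Definition D (c : M) : rat :=
  \prod_(i < N.+1) ((i : nat)%:R ^+ (c i : nat) * ((c i : nat)`!)%:R).
Definition w (c : M) : rat := 2%:R ^+ (msize c) / D c.
Definition S s := \sum_(c in A s) w c.

Definition inc (i : 'I_N.+1) (c : M) : M :=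
  [ffun j => if j == i then inord (c j).+1 else c j].
Definition dec (i : 'I_N.+1) (c : M) : M :=
  [ffun j => if j == i then inord (c j).-1 else c j].

Lemma inc_i i (c : M) : (inc i c i : nat) = if (c i < N)%N then (c i).+1 else 0%N.
Proof. by rewrite /inc ffunE eqxx /inord val_insubd. Qed.

Lemma inc_j i (c : M) j : j != i -> inc i c j = c j.
Proof. by rewrite /inc ffunE => /negbTE ->. Qed.

Lemma inc_decK i (c : M) : (0 < c i)%N -> inc i (dec i c) = c.
Proof.
move=> ci; apply/ffunP => j; rewrite /inc /dec !ffunE.
case: eqP => [->|//]; apply: val_inj => /=.
have := ltn_ord (c i) => lt.
rewrite (@inordK N (c i).-1); last lia.
rewrite inordK; last lia.
lia.
Qed.

Lemma dec_incK i (c : M) : (c i < N)%N -> dec i (inc i c) = c.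
Proof.
move=> ci; apply/ffunP => j; rewrite /inc /dec !ffunE.
case: eqP => [->|//]; apply: val_inj => /=.
rewrite (@inordK N (c i).+1); last lia.
by rewrite /= inord_val.
Qed.

Lemma sum_inc (F : 'I_N.+1 -> nat -> nat) i (c : M) : (c i < N)%N ->
  (\sum_(j < N.+1) F j (inc i c j) = \sum_(j < N.+1) F j (c j) - F i (c i) + F i (c i).+1)%N.
Proof.
move=> ci; rewrite (bigD1 i) //= [in RHS](bigD1 i) //= inc_i ci.
rewrite (eq_bigr (fun j => F j (c j))); last by move=> j /inc_j ->.
lia.
Qed.

Lemma wt_inc i (c : M) : (c i < N)%N -> wt (inc i c) = (wt c + i)%N.
Proof.
move=> ci; rewrite /wt (sum_inc (fun j x => j * x)%N) //.
rewrite (bigD1 i) //=; lia.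
Qed.

Lemma msize_inc i (c : M) : (c i < N)%N -> msize (inc i c) = (msize c).+1.
Proof.
move=> ci; rewrite /msize (sum_inc (fun j x => x)) //.
rewrite (bigD1 i) //=; lia.
Qed.

Lemma D_inc i (c : M) : (c i < N)%N -> D (inc i c) = D c * (i%:R * (c i).+1%:R).
Proof.
move=> ci; rewrite /D (bigD1 i) //= [in RHS](bigD1 i) //= inc_i ci.
rewrite (eq_bigr (fun j : 'I_N.+1 => (j : nat)%:R ^+ (c j : nat) * ((c j : nat)`!)%:R)); last by move=> j /inc_j ->.
rewrite factS natrM exprS; ring.
Qed.


Lemma le_wt (i : 'I_N.+1) (c : M) : (i * c i <= wt c)%N.
Proof. by rewrite /wt (bigD1 i) //= leq_addr. Qed.

Lemma osuppP (c : M) (j : 'I_N.+1) : osupp c -> ~~ odd j -> (c j : nat) = 0%N.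
Proof. by move/forallP/(_ j)/implyP => H /H /eqP. Qed.

Lemma memA_inc (i : 'I_N.+1) s (c : M) : odd i -> (i <= s)%N -> (s <= N)%N ->
  ((inc i c \in A s) && (0 < inc i c i)%N && (dec i (inc i c) == c)) = (c \in A (s - i)).
Proof.
move=> oi iS sN; have i1 : (0 < i)%N by case: (nat_of_ord i) oi.
rewrite !inE; apply/idP/idP.
- case/andP => /andP [/andP [os /eqP ws] pos] _.
  have ci : (c i < N)%N by move: pos; rewrite inc_i; case: ifP.
  rewrite wt_inc // in ws.
  apply/andP; split; last by apply/eqP; lia.
  apply/forallP => j; apply/implyP => oj.
  have ji : j != i by apply/eqP => ji; rewrite ji oi in oj.
  by rewrite -(inc_j c ji) (osuppP os oj).
- case/andP => os /eqP ws.
  have := le_wt i c; rewrite ws => le.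
  have ci : (c i < N)%N by nia.
  rewrite dec_incK // eqxx andbT inc_i ci /= andbT wt_inc // ws subnK // eqxx andbT.
  apply/forallP => j; apply/implyP => oj.
  have ji : j != i by apply/eqP => ji; rewrite ji oi in oj.
  by rewrite (inc_j c ji) (osuppP os oj).
Qed.

Lemma D_neq0 (c : M) : osupp c -> D c != 0.
Proof.
move=> os; apply/prodf_neq0 => j _.
rewrite mulf_neq0 // ?pnatr_eq0 -?lt0n ?fact_gt0 //.
case: (posnP (c j)) => [->|cj]; first by rewrite expr0 oner_neq0.
apply: expf_neq0; rewrite pnatr_eq0; apply/eqP => j0.
by move: cj; rewrite (osuppP os) // j0.
Qed.

Lemma Ti (i : 'I_N.+1) s : (s <= N)%N ->
  \sum_(c in A s) ((i * c i)%N)%:R * w c = if odd i && (i <= s)%N then 2 * S (s - i) else 0.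
Proof.
move=> sN.
rewrite (bigID (fun c : M => 0 < c i)%N) /=.
rewrite [X in _ + X]big1 ?addr0; last first.
  by move=> c /andP[_]; rewrite -eqn0Ngt => /eqP ->; rewrite muln0 mul0r.
case: ifP => [/andP [oi iS]|hn].
- rewrite (reindex_onto (inc i) (dec i)) /=; last by move=> c /andP[_ /inc_decK].
  rewrite /S mulr_sumr; apply: eq_big => c; first exact: memA_inc.
  rewrite memA_inc // inE => /andP [os /eqP ws].
  have i1 : (0 < i)%N by case: (nat_of_ord i) oi.
  have ci : (c i < N)%N by have := le_wt i c; rewrite ws; nia.
  rewrite inc_i ci /w msize_inc // D_inc // exprS natrM.
  have := D_neq0 os => Dn.
  have i0 : (i%:R : rat) != 0 by rewrite pnatr_eq0 -lt0n.
  have c0 : ((c i).+1%:R : rat) != 0 by rewrite pnatr_eq0.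
  field.
  by rewrite Dn i0 -(natrD rat 1) pnatr_eq0.
- rewrite big1 // => c /andP [cA pos]; exfalso.
  move: cA; rewrite inE => /andP [os /eqP ws].
  move: hn; case oi: (odd i) => /=.
  + have := le_wt i c; rewrite ws; nia.
  + by move: pos; rewrite (osuppP os) // oi.
Qed.

Lemma recS s : (s <= N)%N ->
  s%:R * S s = \sum_(i < N.+1) (if odd i && (i <= s)%N then 2 * S (s - i) else 0).
Proof.
move=> sN; rewrite /S mulr_sumr.
transitivity (\sum_(c in A s) \sum_(i < N.+1) ((i * c i)%N)%:R * w c).
  apply: eq_bigr => c; rewrite inE => /andP [_ /eqP ws].
  by rewrite -mulr_suml -natr_sum -ws.
rewrite exchange_big; apply: eq_bigr => i _; exact: Ti.
Qed.

Definition c0 : M := [ffun _ => ord0].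

Lemma S0 : S 0 = 1.
Proof.
rewrite /S (big_pred1 c0); last first.
  move=> c; rewrite inE /=; apply/idP/idP.
  - case/andP => os /eqP ws; apply/eqP/ffunP => j; rewrite ffunE; apply: val_inj => /=.
    case: (posnP j) => [j0|jp]; first by rewrite (osuppP os) // j0.
    have := le_wt j c; rewrite ws; nia.
  - move/eqP => ->; apply/andP; split.
    + by apply/forallP => j; rewrite /c0 ffunE implybT.
    + by rewrite /wt big1 // => j _; rewrite /c0 ffunE muln0.
rewrite /w /msize /D big1 ?expr0; last by move=> j _; rewrite ffunE.
rewrite big1 ?invr1 ?mulr1 //; last by move=> j _; rewrite ffunE expr0 mul1r.
Qed.

Lemma hsum s : (\sum_(0 <= i < s) (if odd i then 2 else 0) = s - odd s)%N.
Proof.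
elim: s => [|s IH]; first by rewrite big_nil.
rewrite big_nat_recr //= IH; case os: (odd s) => /=; last lia.
by case: s os IH => // s _ _; lia.
Qed.

Lemma cnt s : (s <= N)%N ->
  (\sum_(i < N.+1) (if odd i && (i <= s)%N then (if (i : nat) == s then 1 else 2) else 0))%N = s.
Proof.
move=> sN.
rewrite -(big_mkord xpredT (fun i => if odd i && (i <= s)%N then (if i == s then 1 else 2) else 0)%N).
rewrite (big_cat_nat (n := s.+1)) //=.
rewrite [X in (_ + X)%N]big_nat_cond [X in (_ + X)%N]big1; last first.
  by move=> i /andP [/andP [si _] _]; rewrite leqNgt si andbF.
rewrite big_nat_recr //= eqxx leqnn andbT.
rewrite big_nat_cond (eq_bigr (fun i => if odd i then 2 else 0)%N); last first.
  move=> i /andP [/andP [_ iS] _]; rewrite ltnW // ltn_eqF //; case: (odd i) => //.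
rewrite -big_nat_cond hsum; case os: (odd s) => /=.
  by case: s os sN => // s _ _; lia.
lia.
Qed.

Lemma S2 s : (0 < s <= N)%N -> S s = 2.
Proof.
elim/ltn_ind: s => s IH /andP [sp sN].
have := recS sN.
rewrite (eq_bigr (fun i : 'I_N.+1 => 2 * ((if odd i && (i <= s)%N then (if (i:nat) == s then 1 else 2) else 0)%N)%:R)); last first.
  move=> i _; case: ifP => [/andP [oi iS]|]; last by rewrite mulr0.
  have i1 : (0 < i)%N by case: (nat_of_ord i) oi.
  case: eqP => [->|ne]; first by rewrite subnn S0 mulr1.
  by rewrite IH //; lia.
rewrite -mulr_sumr -natr_sum cnt // => h.
apply: (mulfI (x := s%:R)); first by rewrite pnatr_eq0 -lt0n.
by rewrite h mulrC.
Qed.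

Lemma wt_le (c : M) : (wt c <= N * msize c)%N.
Proof.
rewrite /wt /msize big_distrr /=; apply: leq_sum => i _.
by rewrite leq_mul2r -ltnS ltn_ord orbT.
Qed.

End S.

Theorem lemmaA9 (k : nat) : (0 < k)%N -> \sum_(c in Ok k) Pw c = 1.
Proof.
move=> kp.
have -> : Ok k = A k k by [].
transitivity (\sum_(c in A k k) w c / 2).
  apply: eq_bigr => c; rewrite inE => /andP [os /eqP ws].
  have mp : (0 < msize c)%N.
    have := wt_le c; rewrite ws; case: (msize c) => //; lia.
  rewrite /Pw /w -/(D c) -(prednK mp) exprS.
  have := D_neq0 os => Dn.
  field.
  by rewrite Dn.
rewrite -mulr_suml.
have := @S2 k k; rewrite /S => -> //; last by rewrite kp leqnn.
Qed.
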